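(* Let $(E,\mathcal{E},\mu)$, the exchangeable pair $(X,X')$, $L$ and $\Gamma$ be as in the context, and let $F\in L^4(\mu)$. Then \[\mathbb{E}\bigl[(F(X')-F(X))^4\bigr]=4\Bigl(E_\mu[F^3\,LF]+3E_\mu[F^2\Gamma(F,F)]\Bigr)=4\Bigl(3E_\mu[F^2\Gamma(F,F)]-E_\mu[\Gamma(F^3,F)]\Bigr).\] If moreover $F$ is an eigenfunction of $-L$ with eigenvalue $\lambda>0$ (i.e. $LF=-\lambda F$), then \[\mathbb{E}\bigl[(F(X')-F(X))^4\bigr]=4\lambda\Bigl(3E_\mu\bigl[F^2\lambda^{-1}\Gamma(F,F)\bigr]-E_\mu[F^4]\Bigr).\]
   Context: $(E,\mathcal{E},\mu)$ is a probability space; $(X,X')$ is an exchangeable pair (i.e. $(X,X')\overset{d}{=}(X',X)$) of $E$-valued random variables on $(\Omega,\mathcal{F},\mathbb{P})$ with $\mathbb{P}\circ X^{-1}=\mu$, admitting a regular conditional distribution of $X'$ given $X$. $LF(x):=\mathbb{E}[F(X')-F(X)\mid X=x]$ (defined on $L^1(\mu)$ and $L^2(\mu)$), $\Gamma(F,G):=\frac12(L(FG)-F\,LG-G\,LF)$; $E_\mu$ is expectation under $\mu$. *)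

(* Defs.v *)
From mathcomp Require Import all_boot all_order all_algebra.
From mathcomp Require Import all_classical all_reals all_analysis.
Set Implicit Arguments. Unset Strict Implicit. Unset Printing Implicit Defensive.
Import Order.TTheory GRing.Theory Num.Theory.
Local Open Scope classical_set_scope.
Local Open Scope ring_scope.

Section defs.
Context d dE (Omega : measurableType d) (E : measurableType dE) (R : realType).

Definition exchangeable (P : probability Omega R) (X X' : Omega -> E) : Prop :=
  forall A : set (E * E)%type, measurable A ->
    P ((fun w => (X w, X' w)) @^-1` A) = P ((fun w => (X' w, X w)) @^-1` A).

Definition is_rcd (P : probability Omega R) (X : {mfun Omega >-> E})
  (X' : Omega -> E) (K : R.-pker E ~> E) : Prop :=
  forall A B : set E, measurable A -> measurable B ->
    P (X @^-1` A `&` X' @^-1` B) = (\int[distribution P X]_(x in A) K x B)%E.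

(* L F (x) = E[F(X') - F(X) | X = x], computed with the regular
   conditional distribution K. *)
Definition Lgen (K : R.-pker E ~> E) (F : E -> R) (x : E) : R :=
  Rintegral (K x) setT (fun y => F y - F x).

Definition Gam (K : R.-pker E ~> E) (F G : E -> R) (x : E) : R :=
  2^-1 * (Lgen K (F \* G) x - F x * Lgen K G x - G x * Lgen K F x).

Definition inLp (mu : {measure set E -> \bar R}) (p : nat) (F : E -> R) : Prop :=
  measurable_fun setT F /\ (\int[mu]_x (`|F x| ^+ p)%:E < +oo)%E.

End defs.

(* Main.v *)
Require Import Defs.
From HB Require Import structures.
From mathcomp Require Import all_boot all_order all_algebra.
From mathcomp Require Import all_classical all_reals all_analysis.
From mathcomp Require Import measurable_realfun.
From mathcomp Require Import ring lra.
Import Order.TTheory GRing.Theory Num.Theory.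
Local Open Scope classical_set_scope.
Local Open Scope ring_scope.

Module Aux.
Set Implicit Arguments. Unset Strict Implicit. Unset Printing Implicit Defensive.
Local Open Scope ereal_scope.


Section kern.
Context dE (E : measurableType dE) (R : realType).
Variable (mu : probability E R).
Variable K : R.-pker E ~> E.

Definition kcst : unit -> {measure set E -> \bar R} := fun _ => mu.
Lemma kcst_meas U : measurable U -> measurable_fun [set: unit] ((kcst ^~ U) : unit -> \bar R).
Proof. by move=> _; exact: measurable_cst. Qed.
HB.instance Definition _ := isKernel.Build _ _ unit E R kcst kcst_meas.
Lemma kcst_prob x : kcst x setT = 1%E. Proof. exact: probability_setT. Qed.
HB.instance Definition _ := Kernel_isProbability.Build _ _ unit E R kcst kcst_prob.

Definition kpair0 (p : unit * E) (A : set (E * E)) : \bar R := K p.2 (xsection A p.2).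

Let kpair0_0 p : kpair0 p set0 = 0.
Proof. by rewrite /kpair0 xsection0 measure0. Qed.
Let kpair0_ge0 p A : 0 <= kpair0 p A.
Proof. exact: measure_ge0. Qed.
Let kpair0_sa p : semi_sigma_additive (kpair0 p).
Proof.
move=> F mF tF mUF; rewrite /kpair0 xsection_bigcup.
apply: measure_semi_sigma_additive.
- by move=> n; exact: measurable_xsection.
- exact: trivIset_xsection.
- by rewrite -xsection_bigcup; exact: measurable_xsection.
Qed.
HB.instance Definition _ p := isMeasure.Build _ _ R (kpair0 p) (kpair0_0 p) (kpair0_ge0 p) (@kpair0_sa p).
Definition kpair : unit * E -> {measure set (E * E) -> \bar R} := kpair0.

Lemma kpair_meas U : measurable U -> measurable_fun [set: unit * E] ((kpair ^~ U) : unit * E -> \bar R).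
Proof.
move=> mU.
have -> : kpair ^~ U = (fun x => K x (xsection U x)) \o snd by [].
apply: measurableT_comp => //.
by apply: measurable_fun_xsection_finite_kernel; rewrite inE.
Qed.
HB.instance Definition _ := isKernel.Build _ _ _ _ R kpair kpair_meas.
Lemma kpair_prob x : kpair x setT = 1%E.
Proof.
rewrite /kpair /= /kpair0.
have -> : xsection [set: E * E] x.2 = setT by apply/seteqP; split=> y //= _; rewrite /xsection /= in_setT.
exact: prob_kernel.
Qed.
HB.instance Definition _ := Kernel_isProbability.Build _ _ _ _ R kpair kpair_prob.

Definition nuK : {measure set (E * E) -> \bar R} := mkcomp kcst kpair tt.

Lemma nuKE A : measurable A -> nuK A = \int[mu]_x K x (xsection A x).
Proof. by []. Qed.

End kern.

Section pairmf.
Context d d1 d2 (T : measurableType d) (T1 : measurableType d1) (T2: measurableType d2).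
Variables (f : {mfun T >-> T1}) (g : {mfun T >-> T2}).
Definition pairf (w : T) : (T1 * T2)%type := (f w, g w).
Lemma pairf_meas : measurable_fun setT pairf.
Proof. exact: measurable_fun_pair. Qed.
HB.instance Definition _ := isMeasurableFun.Build _ _ _ _ pairf pairf_meas.
End pairmf.

Section joint.
Context d dE (Omega : measurableType d) (E : measurableType dE) (R : realType).
Variables (P : probability Omega R) (X X' : {mfun Omega >-> E}) (K : R.-pker E ~> E).
Hypothesis rcd : is_rcd P X X' K.
Let mu := distribution P X.

Lemma joint_eq A : measurable A -> distribution P (pairf X X') A = nuK mu K A.
Proof.
move=> mA.
apply: (measure_unique [set A `*` B | A in measurable & B in measurable] (fun=> setT)) => //.
- exact: measurable_prod_measurableType.
- move=> _ _ [A1 mA1 [B1 mB1 <-]] [A2 mA2 [B2 mB2 <-]].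
  exists (A1 `&` A2); first exact: measurableI.
  by exists (B1 `&` B2); [exact: measurableI | rewrite setXI].
- by move=> _; exists setT => //; exists setT => //; rewrite setXTT.
- by rewrite bigcup_const.
- move=> _ [A1 mA1 [B1 mB1 <-]].
  transitivity (P (X @^-1` A1 `&` X' @^-1` B1)); first by [].
  rewrite rcd // integral_mkcond /=.
  apply: eq_integral => x _; rewrite patchE.
  have -> : kpair K (tt, x) (A1 `*` B1) = K x (xsection (A1 `*` B1) x) by [].
  case: ifPn => xA; first by rewrite in_xsectionX.
  by rewrite notin_xsectionX // measure0.
- move=> _; change (P (pairf X X' @^-1` setT) < +oo).
  by rewrite preimage_setT probability_setT ltry.
Qed.

Lemma joint_integral (g : (E * E)%type -> \bar R) :
  measurable_fun setT g -> (forall z, 0 <= g z) ->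
  \int[P]_w g (X w, X' w) = \int[mu]_x \int[K x]_y g (x, y).
Proof.
move=> mg g0.
have -> : \int[P]_w g (X w, X' w) = \int[P]_w (g \o pairf X X') w by [].
rewrite -ge0_integral_distribution //.
rewrite (eq_measure_integral (nuK mu K)); last by move=> A mA _; exact: joint_eq.
rewrite /nuK /= integral_kcomp //.
apply: eq_integral => x _ /=.
have -> : kpair K (tt, x) = pushforward (K x) (fun y => (x, y)) :> (set (E * E) -> \bar R).
  by apply/funext => A; rewrite /kpair /= /kpair0 /= xsectionE.
rewrite ge0_integral_pushforward //.
exact: measurable_fun_pair.
Qed.

End joint.


Lemma ae_integrable d (T : measurableType d) (R : realType) (m : {measure set T -> \bar R})
  (f g : T -> \bar R) : measurable_fun setT f -> ae_eq m setT f g ->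
  m.-integrable setT g -> m.-integrable setT f.
Proof.
move=> mf fg ig; apply/integrableP; split => //.
rewrite (@ae_eq_integral _ _ _ _ _ (fun x => `|g x|)) //.
- by move/integrableP : ig => [].
- exact: measurableT_comp.
- apply: measurableT_comp => //; exact: (measurable_int m ig).
- by apply: filterS fg => x h /h ->.
Qed.

Lemma normXX_le (R : realType) (u v : R) (a b : nat) : (a + b = 4)%N ->
  (`|u ^+ a * v ^+ b| <= `|u| ^+ 4 + `|v| ^+ 4)%R.
Proof.
have H : forall (a b : nat) (s t : R), (a + b = 4)%N -> (`|s| <= `|t|)%R ->
    (`|s ^+ a * t ^+ b| <= `|t| ^+ 4)%R.
  move=> a' b' s t ab st; rewrite normrM !normrX -ab exprD.
  by rewrite ler_wpM2r ?exprn_ge0// lerXn2r ?nnegrE.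
move=> ab; have [uv|vu] := lerP `|u| `|v|.
  by apply: le_trans (H _ _ _ _ ab uv) _; rewrite lerDr exprn_ge0.
rewrite mulrC; apply: le_trans (H b a v u _ (ltW vu)) _; first by rewrite addnC.
by rewrite lerDl exprn_ge0.
Qed.


Definition Good d (T : measurableType d) (R : realType) (m : {measure set T -> \bar R})
  (f : T -> R) (a : R) :=
  m.-integrable setT (fun x => (f x)%:E) /\ \int[m]_x (f x)%:E = a%:E.

Section good.
Context d (T : measurableType d) (R : realType) (m : {measure set T -> \bar R}).

Lemma Good_lin (f g : T -> R) (a b k l : R) : Good m f a -> Good m g b ->
  Good m (fun x => k * f x + l * g x)%R (k * a + l * b)%R.
Proof.
move=> [if_ ef] [ig eg]; rewrite /Good.
have ikf := integrableZl measurableT k if_.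
have ilg := integrableZl measurableT l ig.
have -> : (fun x => (k * f x + l * g x)%:E) = (fun x => k%:E * (f x)%:E + l%:E * (g x)%:E).
  by apply/funext => x; rewrite EFinD !EFinM.
split; first exact: (integrableD measurableT ikf ilg).
rewrite (integralD measurableT ikf ilg) !integralZl // ef eg.
by rewrite -!EFinM -EFinD.
Qed.

Lemma Good_ext (f g : T -> R) (a : R) : (forall x, f x = g x) -> Good m g a -> Good m f a.
Proof. by move=> /funext ->. Qed.

Lemma Good_ae (f g : T -> R) (a : R) : measurable_fun setT f ->
  {ae m, forall x, f x = g x} -> Good m g a -> Good m f a.
Proof.
move=> mf fg [ig eg].
have mf' : measurable_fun setT (fun x => (f x)%:E) by apply/measurable_EFinP.
have ae : ae_eq m setT (fun x => (f x)%:E) (fun x => (g x)%:E).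
  by apply: filterS fg => x -> _.
split; first exact: ae_integrable mf' ae ig.
rewrite (ae_eq_integral _ _ measurableT mf' _ ae) //.
exact: (measurable_int m ig).
Qed.

Lemma Good_uniq (f : T -> R) (a b : R) : Good m f a -> Good m f b -> a = b.
Proof. by move=> [_ ea] [_ eb]; move: ea; rewrite eb => -[]. Qed.

End good.


Lemma Good_lin1 d (T : measurableType d) (R : realType) (m : {measure set T -> \bar R})
  (f g : T -> R) (a b k : R) : Good m f a -> Good m g b ->
  Good m (fun x => k * f x + g x)%R (k * a + b)%R.
Proof.
move=> Hf Hg; move: (Good_lin k 1%R Hf Hg); rewrite mul1r.
by apply: Good_ext => x; rewrite mul1r.
Qed.

Section main.
Context d dE (Omega : measurableType d) (E : measurableType dE) (R : realType).
Variables (P : probability Omega R) (X X' : {mfun Omega >-> E}) (K : R.-pker E ~> E) (F : E -> R).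
Hypotheses (exch : exchangeable P X X') (rcd : is_rcd P X X' K) (mF : measurable_fun setT F)
  (F4 : \int[distribution P X]_x (`|F x| ^+ 4)%:E < +oo).
Let mu : probability E R := distribution P X.

Lemma exch_ge0 (g : (E * E)%type -> \bar R) : measurable_fun setT g -> (forall z, 0 <= g z) ->
  \int[P]_w g (X w, X' w) = \int[P]_w g (X' w, X w).
Proof.
move=> mg g0.
have -> : \int[P]_w g (X w, X' w) = \int[P]_w (g \o pairf X X') w by [].
have -> : \int[P]_w g (X' w, X w) = \int[P]_w (g \o pairf X' X) w by [].
rewrite -!ge0_integral_distribution //.
apply: eq_measure_integral => A mA _ /=.
exact: (exch mA).
Qed.

Lemma exch_int (g : (E * E)%type -> \bar R) : measurable_fun setT g ->
  \int[P]_w g (X w, X' w) = \int[P]_w g (X' w, X w).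
Proof.
move=> mg; rewrite integralE [RHS]integralE.
have Hp : forall (a b : Omega -> E), \int[P]_w (fun w => g (a w, b w))^\+ w = \int[P]_w g^\+ (a w, b w).
  by move=> a b; apply: eq_integral => w _; rewrite !funeposE.
have Hn : forall (a b : Omega -> E), \int[P]_w (fun w => g (a w, b w))^\- w = \int[P]_w g^\- (a w, b w).
  by move=> a b; apply: eq_integral => w _; rewrite !funenegE.
rewrite !Hp !Hn; congr (_ - _).
- apply: (exch_ge0 (g := g^\+)); first exact: measurable_funepos.
  by move=> z; exact: funepos_ge0.
- apply: (exch_ge0 (g := g^\-)); first exact: measurable_funeneg.
  by move=> z; exact: funeneg_ge0.
Qed.

Lemma marg (h : E -> \bar R) : measurable_fun setT h ->
  \int[P]_w h (X' w) = \int[P]_w h (X w).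
Proof.
move=> mh; apply: (exch_int (g := h \o snd)).
exact: measurableT_comp.
Qed.

Lemma mFX : measurable_fun setT (fun w => F (X w)).
Proof. exact: measurableT_comp. Qed.
Lemma mFX' : measurable_fun setT (fun w => F (X' w)).
Proof. exact: measurableT_comp. Qed.

Lemma mabs4 : measurable_fun setT (fun x => (`|F x| ^+ 4)%:E).
Proof.
apply/measurable_EFinP; apply: measurable_funX.
exact: measurableT_comp.
Qed.

Lemma int4X : P.-integrable setT (fun w => (`|F (X w)| ^+ 4)%:E).
Proof.
apply/integrableP; split.
  by apply/measurable_EFinP; apply: measurable_funX; apply: measurableT_comp => //; exact: mFX.
under eq_integral do rewrite gee0_abs ?lee_fin ?exprn_ge0//.
have -> : \int[P]_w (`|F (X w)| ^+ 4)%:E = \int[P]_w ((fun x => (`|F x| ^+ 4)%:E) \o X) w by [].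
by rewrite -ge0_integral_distribution //; exact: mabs4.
Qed.

Lemma int4X' : P.-integrable setT (fun w => (`|F (X' w)| ^+ 4)%:E).
Proof.
apply/integrableP; split.
  by apply/measurable_EFinP; apply: measurable_funX; apply: measurableT_comp => //; exact: mFX'.
under eq_integral do rewrite gee0_abs ?lee_fin ?exprn_ge0//.
rewrite (marg mabs4).
by move/integrableP: int4X => [_]; under eq_integral do rewrite gee0_abs ?lee_fin ?exprn_ge0//.
Qed.

Lemma intab a b : (a + b = 4)%N ->
  P.-integrable setT (fun w => (F (X w) ^+ a * F (X' w) ^+ b)%:E).
Proof.
move=> ab.
apply: (le_integrable _ _ _ (integrableD _ int4X int4X')) => //.
- apply/measurable_EFinP; apply: measurable_funM; apply: measurable_funX.
  + exact: mFX.
  + exact: mFX'.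
- move=> w _ /=; rewrite lee_fin.
  by rewrite [X in (_ <= X)%R]ger0_norm ?addr_ge0 ?exprn_ge0// normXX_le.
Qed.

Lemma Rint_split (psi : (E * E)%type -> R) x :
  Rintegral (K x) setT (fun y => psi (x, y)) =
  fine (\int[K x]_y (EFin \o psi)^\+ (x, y) - \int[K x]_y (EFin \o psi)^\- (x, y)).
Proof.
rewrite /Rintegral integralE; congr (fine (_ - _)).
- by apply: eq_integral => y _; rewrite !funeposE.
- by apply: eq_integral => y _; rewrite !funenegE.
Qed.

Lemma key (psi : (E * E)%type -> R) : measurable_fun setT psi ->
  P.-integrable setT (fun w => (psi (X w, X' w))%:E) ->
  mu.-integrable setT (fun x => (Rintegral (K x) setT (fun y => psi (x, y)))%:E) /\
  \int[mu]_x (Rintegral (K x) setT (fun y => psi (x, y)))%:E = \int[P]_w (psi (X w, X' w))%:E.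
Proof.
move=> mpsi ipsi.
pose g := EFin \o psi.
have mg : measurable_fun setT g by apply/measurable_EFinP.
pose php x := \int[K x]_y g^\+ (x, y).
pose phn x := \int[K x]_y g^\- (x, y).
have mphp : measurable_fun setT php.
  apply: (measurable_fun_integral_finite_kernel (g^\+) K) => //; last exact: measurable_funepos.
have mphn : measurable_fun setT phn.
  apply: (measurable_fun_integral_finite_kernel (g^\-) K) => //; last exact: measurable_funeneg.
have jp : \int[P]_w g^\+ (X w, X' w) = \int[mu]_x php x.
  apply: joint_integral => //; exact: measurable_funepos.
have jn : \int[P]_w g^\- (X w, X' w) = \int[mu]_x phn x.
  apply: joint_integral => //; exact: measurable_funeneg.
have Pp : \int[P]_w (fun w => (psi (X w, X' w))%:E)^\+ w = \int[P]_w g^\+ (X w, X' w).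
  by apply: eq_integral => w _; rewrite !funeposE.
have Pn : \int[P]_w (fun w => (psi (X w, X' w))%:E)^\- w = \int[P]_w g^\- (X w, X' w).
  by apply: eq_integral => w _; rewrite !funenegE.
have iphp : mu.-integrable setT php.
  apply/integrableP; split => //.
  under eq_integral do rewrite gee0_abs ?integral_ge0//.
  rewrite -jp -Pp ltey_eq; apply/orP; left.
  exact: (integrable_fin_num measurableT (integrable_funepos measurableT ipsi)).
have iphn : mu.-integrable setT phn.
  apply/integrableP; split => //.
  under eq_integral do rewrite gee0_abs ?integral_ge0//.
  rewrite -jn -Pn ltey_eq; apply/orP; left.
  exact: (integrable_fin_num measurableT (integrable_funeneg measurableT ipsi)).
have aep := integrable_ae measurableT iphp.
have aen := integrable_ae measurableT iphn.
have mfp : measurable_fun setT (fun x => (fine (php x))%:E).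
  by apply/measurable_EFinP; apply: measurableT_comp => //; exact: fine_measurable.
have mfn : measurable_fun setT (fun x => (fine (phn x))%:E).
  by apply/measurable_EFinP; apply: measurableT_comp => //; exact: fine_measurable.
have aefp : ae_eq mu setT (fun x => (fine (php x))%:E) php.
  by apply: filterS aep => x h /h hx; rewrite fineK.
have aefn : ae_eq mu setT (fun x => (fine (phn x))%:E) phn.
  by apply: filterS aen => x h /h hx; rewrite fineK.
have ifp := ae_integrable mfp aefp iphp.
have ifn := ae_integrable mfn aefn iphn.
have mR : measurable_fun setT (fun x => (Rintegral (K x) setT (fun y => psi (x, y)))%:E).
  apply/measurable_EFinP.
  have -> : (fun x => Rintegral (K x) setT (fun y => psi (x, y))) = fine \o (fun x => php x - phn x).
    by apply/funext => x; rewrite Rint_split.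
  apply: measurableT_comp; first exact: fine_measurable.
  exact: emeasurable_funB.
have aeR : ae_eq mu setT (fun x => (Rintegral (K x) setT (fun y => psi (x, y)))%:E)
    (fun x => (fine (php x))%:E - (fine (phn x))%:E).
  apply: filterS2 aep aen => x hp hn /[dup] /hp {}hp /hn {}hn.
  by rewrite Rint_split fineB.
split.
  apply: ae_integrable mR aeR _.
  exact: integrableB.
rewrite (ae_eq_integral _ _ measurableT _ _ aeR) //; last first.
  by apply: emeasurable_funB.
rewrite integralB // (ae_eq_integral _ _ measurableT mfp mphp aefp).
rewrite (ae_eq_integral _ _ measurableT mfn mphn aefn).
by rewrite -jp -jn -Pp -Pn -integralE.
Qed.

Lemma mRint (psi : (E * E)%type -> R) : measurable_fun setT psi ->
  measurable_fun setT (fun x => Rintegral (K x) setT (fun y => psi (x, y))).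
Proof.
move=> mpsi; have mg : measurable_fun setT (EFin \o psi) by apply/measurable_EFinP.
have -> : (fun x => Rintegral (K x) setT (fun y => psi (x, y))) =
  fine \o (fun x => \int[K x]_y (EFin \o psi)^\+ (x, y) - \int[K x]_y (EFin \o psi)^\- (x, y)).
  by apply/funext => x; rewrite Rint_split.
apply: measurableT_comp; first exact: fine_measurable.
apply: emeasurable_funB; apply: (measurable_fun_integral_finite_kernel _ K) => //.
- exact: measurable_funepos.
- exact: measurable_funeneg.
Qed.

Lemma pow_le1_4 (t : R) k : (0 <= t)%R -> (k <= 4)%N -> (t ^+ k <= 1 + t ^+ 4)%R.
Proof.
move=> t0 k4; have [t1|t1] := lerP t 1.
  by apply: le_trans (exprn_ile1 _ t0 t1) _; rewrite lerDl exprn_ge0.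
by apply: le_trans (ler_weXn2l (ltW t1) k4) _; rewrite lerDr.
Qed.

Lemma Kint_cst x (c : R) : (K x).-integrable setT (fun _ => c%:E).
Proof.
apply/integrableP; split; first exact: measurable_cst.
by rewrite integral_cst // prob_kernel mule1 ltry.
Qed.

Lemma KintFk x k : (k <= 4)%N -> \int[K x]_y (`|F y| ^+ 4)%:E \is a fin_num ->
  (K x).-integrable setT (fun y => (F y ^+ k)%:E).
Proof.
move=> k4 fx.
have i4 : (K x).-integrable setT (fun y => (`|F y| ^+ 4)%:E).
  apply/integrableP; split; first exact: mabs4.
  under eq_integral do rewrite gee0_abs ?lee_fin ?exprn_ge0//.
  by rewrite ltey_eq fx.
apply: (le_integrable _ _ _ (integrableD _ (Kint_cst x 1) i4)) => //.
- apply/measurable_EFinP; exact: measurable_funX.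
- move=> y _ /=; rewrite lee_fin.
  rewrite [X in (_ <= X)%R]ger0_norm ?addr_ge0 ?exprn_ge0// normrX.
  exact: pow_le1_4.
Qed.

Definition M (b : nat) x := Rintegral (K x) setT (fun y => (F y ^+ b)%R).

Lemma LgenE x b : (b <= 4)%N -> \int[K x]_y (`|F y| ^+ 4)%:E \is a fin_num ->
  Lgen K (fun y => F y ^+ b)%R x = (M b x - F x ^+ b)%R.
Proof.
move=> b4 fx; rewrite /Lgen RintegralB //.
- by rewrite Rintegral_cst // prob_kernel /= mulr1.
- exact: KintFk.
- exact: Kint_cst.
Qed.

Lemma aeG : {ae mu, forall x, \int[K x]_y (`|F y| ^+ 4)%:E \is a fin_num}.
Proof.
pose phi x := \int[K x]_y (`|F y| ^+ 4)%:E.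
have mg : measurable_fun setT (fun z : (E * E)%type => (`|F z.2| ^+ 4)%:E).
  apply/measurable_EFinP; apply: measurable_funX; apply: measurableT_comp => //.
  exact: measurableT_comp.
have mphi : measurable_fun setT phi.
  apply: (measurable_fun_integral_finite_kernel (fun z => (`|F z.2| ^+ 4)%:E) K) => //.
have : mu.-integrable setT phi.
  apply/integrableP; split => //.
  under eq_integral do rewrite gee0_abs ?integral_ge0//.
  rewrite /phi -(joint_integral rcd (g := fun z => (`|F z.2| ^+ 4)%:E)) //=.
  - move/integrableP: int4X' => [_]; by under eq_integral do rewrite gee0_abs ?lee_fin ?exprn_ge0//.
move=> /(integrable_ae measurableT) h; apply: filterS h => x; by apply.
Qed.

Lemma Cab a b : (a + b = 4)%N ->
  mu.-integrable setT (fun x => (F x ^+ a * M b x)%:E) /\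
  \int[mu]_x (F x ^+ a * M b x)%:E = \int[P]_w (F (X w) ^+ a * F (X' w) ^+ b)%:E.
Proof.
move=> ab.
have mpsi : measurable_fun setT (fun z : (E * E)%type => F z.1 ^+ a * F z.2 ^+ b)%R.
  apply: measurable_funM; apply: measurable_funX; exact: measurableT_comp.
have [ik ek] := key mpsi (intab ab).
have mM : measurable_fun setT (fun x => (F x ^+ a * M b x)%:E).
  apply/measurable_EFinP; apply: measurable_funM; first exact: measurable_funX.
  apply: (mRint (psi := fun z : (E * E)%type => (F z.2 ^+ b)%R)).
  apply: measurable_funX; exact: measurableT_comp.
have ae : ae_eq mu setT (fun x => (F x ^+ a * M b x)%:E)
    (fun x => (Rintegral (K x) setT (fun y => F x ^+ a * F y ^+ b))%:E).
  apply: filterS aeG => x Gx _; rewrite RintegralZl //.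
  by apply: KintFk => //; rewrite -ab leq_addl.
split; first exact: ae_integrable mM ae ik.
rewrite (ae_eq_integral _ _ measurableT _ _ ae) //.
exact: (measurable_int mu ik).
Qed.

Definition c a b := fine (\int[P]_w (F (X w) ^+ a * F (X' w) ^+ b)%:E).

Lemma GoodP a b : (a + b = 4)%N -> Good P (fun w => F (X w) ^+ a * F (X' w) ^+ b)%R (c a b).
Proof.
move=> ab; split; first exact: intab.
by rewrite fineK //; exact: (integrable_fin_num measurableT (intab ab)).
Qed.

Lemma GoodM a b : (a + b = 4)%N -> Good mu (fun x => F x ^+ a * M b x)%R (c a b).
Proof. by move=> ab; have [i e] := Cab ab; split => //; rewrite e; exact: (GoodP ab).2. Qed.

Lemma GoodM5 (k0 k1 k2 k3 k4 : R) :
  Good mu (fun x => k0 * (F x ^+ 4 * M 0 x) + (k1 * (F x ^+ 3 * M 1 x) +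
     (k2 * (F x ^+ 2 * M 2 x) + (k3 * (F x ^+ 1 * M 3 x) + k4 * (F x ^+ 0 * M 4 x)))))%R
   (k0 * c 4 0 + (k1 * c 3 1 + (k2 * c 2 2 + (k3 * c 1 3 + k4 * c 0 4))))%R.
Proof.
apply: Good_lin1; first exact: GoodM.
apply: Good_lin1; first exact: GoodM.
apply: Good_lin1; first exact: GoodM.
by apply: Good_lin; exact: GoodM.
Qed.

Lemma GoodP5 (k0 k1 k2 k3 k4 : R) :
  Good P (fun w => k0 * (F (X w) ^+ 4 * F (X' w) ^+ 0) + (k1 * (F (X w) ^+ 3 * F (X' w) ^+ 1) +
     (k2 * (F (X w) ^+ 2 * F (X' w) ^+ 2) + (k3 * (F (X w) ^+ 1 * F (X' w) ^+ 3)
       + k4 * (F (X w) ^+ 0 * F (X' w) ^+ 4)))))%R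
   (k0 * c 4 0 + (k1 * c 3 1 + (k2 * c 2 2 + (k3 * c 1 3 + k4 * c 0 4))))%R.
Proof.
apply: Good_lin1; first exact: GoodP.
apply: Good_lin1; first exact: GoodP.
apply: Good_lin1; first exact: GoodP.
by apply: Good_lin; exact: GoodP.
Qed.

Lemma c_sym a b : (a + b = 4)%N -> c a b = c b a.
Proof.
move=> ab; rewrite /c; congr fine.
have mg : measurable_fun setT (fun z : (E * E)%type => (F z.1 ^+ a * F z.2 ^+ b)%:E).
  apply/measurable_EFinP; apply: measurable_funM; apply: measurable_funX; exact: measurableT_comp.
rewrite (exch_int mg); apply: eq_integral => w _ /=; by rewrite mulrC.
Qed.

Lemma mLgen (h : E -> R) : measurable_fun setT h -> measurable_fun setT (Lgen K h).
Proof.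
move=> mh; apply: (mRint (psi := fun z : (E * E)%type => (h z.2 - h z.1)%R)).
by apply: measurable_funB; exact: measurableT_comp.
Qed.

Lemma mGam (h1 h2 : E -> R) : measurable_fun setT h1 -> measurable_fun setT h2 ->
  measurable_fun setT (Gam K h1 h2).
Proof.
move=> m1 m2; apply: measurable_funM; first exact: measurable_cst.
apply: measurable_funB; first apply: measurable_funB.
- by apply: mLgen; exact: measurable_funM.
- by apply: measurable_funM => //; exact: mLgen.
- by apply: measurable_funM => //; exact: mLgen.
Qed.

Lemma M0 x : M 0 x = 1%R.
Proof.
rewrite /M (_ : (fun y => (F y ^+ 0)%R) = (fun _ => 1%R)); last by apply/funext => y; rewrite expr0.
by rewrite Rintegral_cst // prob_kernel /= mul1r.
Qed.

Lemma LF x : \int[K x]_y (`|F y| ^+ 4)%:E \is a fin_num -> Lgen K F x = (M 1 x - F x)%R.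
Proof.
move=> Gx; have := LgenE (b := 1) isT Gx.
by rewrite (_ : (fun y => (F y ^+ 1)%R) = F) ?expr1 //; apply/funext => y; rewrite expr1.
Qed.

Local Close Scope ereal_scope.
Lemma main_res :
  let L := Lgen K in
  let G := Gam K in
  ('E_P[fun w => ((F (X' w) - F (X w)) ^+ 4)%R]
     = 4%:E * (\int[distribution P X]_x (F x ^+ 3 * L F x)%:E
               + 3%:E * \int[distribution P X]_x (F x ^+ 2 * G F F x)%:E)
   /\ 'E_P[fun w => ((F (X' w) - F (X w)) ^+ 4)%R]
     = 4%:E * (3%:E * \int[distribution P X]_x (F x ^+ 2 * G F F x)%:E
               - \int[distribution P X]_x (G (F ^+ 3) F x)%:E))%E
  /\ (forall lambda : R, 0 < lambda ->
        {ae distribution P X, forall x, L F x = - (lambda * F x)} ->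
        ('E_P[fun w => ((F (X' w) - F (X w)) ^+ 4)%R]
          = (4 * lambda)%:E
             * (3%:E * \int[distribution P X]_x (F x ^+ 2 * (lambda^-1 * G F F x))%:E
                - \int[distribution P X]_x (F x ^+ 4)%:E))%E).
Proof.
move=> L G; rewrite /L /G {L G}.
have EL : Good P (fun w => ((F (X' w) - F (X w)) ^+ 4)%R)
   (1 * c 4 0 + (-4 * c 3 1 + (6 * c 2 2 + (-4 * c 1 3 + 1 * c 0 4))))%R.
  apply: Good_ext (GoodP5 1 (-4) 6 (-4) 1) => w; ring.
have E_L : ('E_P[fun w => ((F (X' w) - F (X w)) ^+ 4)%R] =
   (1 * c 4 0 + (-4 * c 3 1 + (6 * c 2 2 + (-4 * c 1 3 + 1 * c 0 4))))%R%:E)%E.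
  by rewrite unlock; exact: EL.2.
have c13 := c_sym (a := 1) (b := 3) erefl.
have c04 := c_sym (a := 0) (b := 4) erefl.
have mFk k : measurable_fun setT (fun x => (F x ^+ k)%R) by exact: measurable_funX.
have I1 : Good mu (fun x => F x ^+ 3 * Lgen K F x)%R
   (-1 * c 4 0 + (1 * c 3 1 + (0 * c 2 2 + (0 * c 1 3 + 0 * c 0 4))))%R.
  apply: Good_ae (GoodM5 _ _ _ _ _).
    by apply: measurable_funM => //; exact: mLgen.
  apply: filterS aeG => x Gx; rewrite LF // M0; ring.
have I2 : Good mu (fun x => F x ^+ 2 * Gam K F F x)%R
   ((2^-1) * c 4 0 + (-1 * c 3 1 + ((2^-1) * c 2 2 + (0 * c 1 3 + 0 * c 0 4))))%R.
  apply: Good_ae (GoodM5 _ _ _ _ _).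
    by apply: measurable_funM => //; exact: mGam.
  apply: filterS aeG => x Gx; rewrite /Gam LF // M0.
  have := LgenE (b := 2) isT Gx.
  rewrite (_ : (fun y => (F y ^+ 2)%R) = F \* F); last by apply/funext => y; rewrite expr2.
  by move=> ->; field.
have I3 : Good mu (fun x => Gam K (F ^+ 3) F x)%R
   ((2^-1) * c 4 0 + (-(2^-1) * c 3 1 + (0 * c 2 2 + (-(2^-1) * c 1 3 + (2^-1) * c 0 4))))%R.
  apply: Good_ae (GoodM5 _ _ _ _ _).
    apply: mGam => //; rewrite (_ : F ^+ 3 = (fun y => (F y ^+ 3)%R)); [exact: measurable_funX | by apply/funext].
  apply: filterS aeG => x Gx; rewrite /Gam LF // M0.
  have := LgenE (b := 3) isT Gx.
  rewrite (_ : (fun y => (F y ^+ 3)%R) = F ^+ 3); last by apply/funext.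
  move=> ->.
  have := LgenE (b := 4) isT Gx.
  rewrite (_ : (fun y => (F y ^+ 4)%R) = F ^+ 3 \* F); last first.
    by apply/funext => y /=; rewrite exprSr.
  by move=> ->; rewrite (_ : (F ^+ 3) x = (F x ^+ 3)%R) //; field.
split; first split.
- rewrite E_L I1.2 I2.2 -!EFinM; congr EFin.
  by rewrite c13 c04; field.
- rewrite E_L I2.2 I3.2 -!EFinM -?EFinB -?EFinM; congr EFin.
  by rewrite c13 c04; field.
move=> lambda l0 H.
have I4 : Good mu (fun x => F x ^+ 2 * (lambda^-1 * Gam K F F x))%R
   (lambda^-1 * ((2^-1) * c 4 0 + (-1 * c 3 1 + ((2^-1) * c 2 2 + (0 * c 1 3 + 0 * c 0 4)))) + 0 * ((2^-1) * c 4 0 + (-1 * c 3 1 + ((2^-1) * c 2 2 + (0 * c 1 3 + 0 * c 0 4)))))%R.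
  by apply: Good_ext (Good_lin lambda^-1 0%R I2 I2) => x; ring.
have I5 : Good mu (fun x => F x ^+ 4)%R (c 4 0).
  by apply: Good_ext (GoodM (a := 4) (b := 0) erefl) => x; rewrite M0 mulr1.
have rel : c 3 1 = ((1 - lambda) * c 4 0)%R.
  have B : Good mu (fun x => F x ^+ 3 * M 1 x)%R
     ((1 - lambda) * c 4 0 + (0 * c 3 1 + (0 * c 2 2 + (0 * c 1 3 + 0 * c 0 4))))%R.
    apply: Good_ae (GoodM5 _ _ _ _ _).
      by apply: measurable_funM => //; apply: (mRint (psi := fun z : (E * E)%type => (F z.2 ^+ 1)%R)); apply: measurable_funX; exact: measurableT_comp.
    apply: filterS2 aeG H => x Gx Hx.
    have hM : M 1 x = (F x - lambda * F x)%R.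
      by rewrite -[M 1 x](subrK (F x)) -LF // Hx; ring.
    rewrite hM M0; ring.
  rewrite (Good_uniq (GoodM (a := 3) (b := 1) erefl) B); ring.
rewrite E_L I4.2 I5.2 -!EFinM -?EFinB -?EFinM; congr EFin.
rewrite c13 c04 rel.
have ln0 : lambda != 0%R by rewrite gt_eqF.
by field.
Qed.

End main.

End Aux.

Theorem lemma2p6 (d dE : measure_display) (Omega : measurableType d)
  (E : measurableType dE) (R : realType) (P : probability Omega R)
  (X X' : {mfun Omega >-> E}) (K : R.-pker E ~> E) (F : E -> R) :
  exchangeable P X X' ->
  is_rcd P X X' K ->
  inLp (distribution P X) 4 F ->
  let L := Lgen K in
  let G := Gam K in
  ('E_P[fun w => ((F (X' w) - F (X w)) ^+ 4)%R]
     = 4%:E * (\int[distribution P X]_x (F x ^+ 3 * L F x)%:E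
               + 3%:E * \int[distribution P X]_x (F x ^+ 2 * G F F x)%:E)
   /\ 'E_P[fun w => ((F (X' w) - F (X w)) ^+ 4)%R]
     = 4%:E * (3%:E * \int[distribution P X]_x (F x ^+ 2 * G F F x)%:E
               - \int[distribution P X]_x (G (F ^+ 3) F x)%:E))%E
  /\ (forall lambda : R, 0 < lambda ->
        {ae distribution P X, forall x, L F x = - (lambda * F x)} ->
        ('E_P[fun w => ((F (X' w) - F (X w)) ^+ 4)%R]
          = (4 * lambda)%:E
             * (3%:E * \int[distribution P X]_x (F x ^+ 2 * (lambda^-1 * G F F x))%:E
                - \int[distribution P X]_x (F x ^+ 4)%:E))%E).
Proof.
move=> ex rc [mF F4]; exact: (Aux.main_res ex rc mF F4).
Qed.
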